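(* (1) Let $M$ and $M'$ be $R$-modules with $W_R(M)\subseteq W_R(M')$. If $M'$ satisfies the dual of Property $\mathcal{A}$ (respectively, the dual of strong Property $\mathcal{A}$), then $M\oplus M'$ satisfies the dual of Property $\mathcal{A}$ (respectively, the dual of strong Property $\mathcal{A}$). (2) Let $N$ be a small submodule of an $R$-module $M$ (i.e. $X+N=M$ implies $X=M$ for every submodule $X$ of $M$). Then $M$ satisfies the dual of Property $\mathcal{A}$ if and only if $M/N$ does; and $M$ is secondal if and only if $M/N$ is secondal.
   Context: All rings are commutative with identity. For an $R$-module $M$, $W_R(M)=\{r\in R : rM\neq M\}$. An $R$-module $M$ satisfies the dual of Property $\mathcal{A}$ if for every finitely generated ideal $I$ of $R$ with $I\subseteq W_R(M)$ we have $IM\neq M$. A proper submodule $L$ of $M$ is completely irreducible if whenever $L=\bigcap_{i\in I}L_i$ for a family $\{L_i\}_{i\in I}$ of submodules of $M$, then $L=L_i$ for some $i$. An $R$-module $M$ satisfies the dual of strong Property $\mathcal{A}$ if for any $a_1,\dots,a_n\in W_R(M)$ there exists a completely irreducible submodule $L$ of $M$ with $a_iM\subseteq L\neq M$ for all $i=1,\dots,n$. A nonzero $R$-module $N$ is secondal if $W_R(N)$ is an ideal of $R$. *)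

(* Defs.v *)
From HB Require Import structures.
From mathcomp Require Import all_boot all_order all_algebra.
Set Implicit Arguments. Unset Strict Implicit. Unset Printing Implicit Defensive.
Import Order.TTheory GRing.Theory.
Local Open Scope ring_scope.

Section Defs.
Variable R : comPzRingType.

Definition submodule (M : lmodType R) (S : M -> Prop) : Prop :=
  [/\ S 0, (forall x y, S x -> S y -> S (x + y)) & (forall r x, S x -> S (r *: x))].

Definition W (M : lmodType R) (r : R) : Prop :=
  ~ (forall m : M, exists x : M, r *: x = m).

Definition ideal_gen (s : seq R) (r : R) : Prop :=
  exists c : seq R, r = \sum_(i < size s) c`_i * s`_i.

Definition idealM (M : lmodType R) (I : R -> Prop) (x : M) : Prop :=
  exists rs : seq (R * M), (forall p, p \in rs -> I p.1) /\
    x = \sum_(p <- rs) p.1 *: p.2.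

Definition dual_A (M : lmodType R) : Prop :=
  forall s : seq R, (forall r, ideal_gen s r -> W M r) ->
    ~ (forall m : M, @idealM M (ideal_gen s) m).

Definition completely_irreducible (M : lmodType R) (L : M -> Prop) : Prop :=
  submodule L /\ (exists m, ~ L m) /\
  forall F : (M -> Prop) -> Prop,
    (forall K, F K -> submodule K) ->
    (forall x, L x <-> (forall K, F K -> K x)) ->
    exists K, F K /\ (forall x, L x <-> K x).

Definition dual_strong_A (M : lmodType R) : Prop :=
  forall s : seq R, (forall a, a \in s -> W M a) ->
    exists L : M -> Prop, completely_irreducible L /\
      (exists m, ~ L m) /\ (forall a, a \in s -> forall m : M, L (a *: m)).

Definition is_ideal (P : R -> Prop) : Prop :=
  [/\ P 0, (forall x y, P x -> P y -> P (x + y)) & (forall r x, P x -> P (r * x))].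

Definition secondal (M : lmodType R) : Prop :=
  (exists x : M, x <> 0) /\ is_ideal (W M).

Definition small_submodule (M : lmodType R) (N : M -> Prop) : Prop :=
  submodule N /\
  forall X : M -> Prop, submodule X ->
    (forall m, exists x n, X x /\ N n /\ m = x + n) -> forall m, X m.

End Defs.

(* Main.v *)
Require Import Defs.
From HB Require Import structures.
From mathcomp Require Import all_boot all_order all_algebra.
From Stdlib Require Import Classical FunctionalExtensionality PropExtensionality.
Import GRing.Theory.
Local Open Scope ring_scope.

Section Helpers.
Variable R : comPzRingType.

Lemma idealM_map (M Q : lmodType R) (g : M -> Q) (I : R -> Prop) :
  g 0 = 0 -> (forall x y, g (x + y) = g x + g y) ->
  (forall a x, g (a *: x) = a *: g x) ->
  forall x, idealM I x -> idealM I (g x).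
Proof.
move=> g0 gD gZ x [rs [HI ->]].
exists [seq (p.1, g p.2) | p <- rs]; split.
  by move=> p /mapP [q qin ->] /=; apply: HI.
elim: rs HI => [|q rs IH] HI; first by rewrite !big_nil.
rewrite /= !big_cons gD gZ IH //.
by move=> p pin; apply: HI; rewrite inE pin orbT.
Qed.

Lemma idealM_sub (M : lmodType R) (I : R -> Prop) : submodule (@idealM R M I).
Proof.
split.
- by exists [::]; split => //; rewrite big_nil.
- move=> x y [r1 [H1 ->]] [r2 [H2 ->]]; exists (r1 ++ r2); split.
    by move=> p; rewrite mem_cat => /orP [] ?; [apply: H1|apply: H2].
  by rewrite big_cat.
- move=> r x [rs [H ->]]; exists [seq (p.1, r *: p.2) | p <- rs]; split.
    by move=> p /mapP [q qin ->] /=; apply: H.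
  rewrite big_map scaler_sumr; apply: eq_bigr => p _ /=.
  by rewrite !scalerA mulrC.
Qed.

Definition surjs (M : lmodType R) (r : R) := forall m : M, exists x : M, r *: x = m.

Lemma W_prod (M M' : lmodType R) r :
  (W M r -> W M' r) -> W (M * M')%type r -> W M' r.
Proof.
move=> H Hp Hs'; apply: Hp => -[m m'].
have Hs : surjs M r.
  apply: NNPP => Hn; exact: (H Hn Hs').
have [x <-] := Hs m; have [x' <-] := Hs' m'.
by exists (x, x').
Qed.

Variables (M Q : lmodType R) (N : M -> Prop) (f : {linear M -> Q}).
Hypothesis (HN : small_submodule N) (Hf : forall q, exists m, f m = q)
  (Hk : forall m, f m = 0 <-> N m).

Lemma small_cover (X : M -> Prop) : submodule X ->
  (forall m, exists x, X x /\ f x = f m) -> forall m, X m.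
Proof.
move=> HX Hc; apply: (HN.2 _ HX) => m.
have [x [Xx fx]] := Hc m.
exists x, (m - x); split => //; split; last by rewrite addrC subrK.
by apply/Hk; rewrite linearB /= fx subrr.
Qed.

Lemma surjs_eq r : surjs M r <-> surjs Q r.
Proof.
split.
  move=> H q; have [m <-] := Hf q; have [x <-] := H m.
  by exists (f x); rewrite linearZ.
move=> H; apply: small_cover.
  split.
  - by exists 0; rewrite scaler0.
  - by move=> x y [a <-] [b <-]; exists (a + b); rewrite scalerDr.
  - by move=> s x [a <-]; exists (s *: a); rewrite !scalerA mulrC.
move=> m; have [q Hq] := H (f m); have [x Hx] := Hf q.
by exists (r *: x); split; [exists x | rewrite linearZ Hx].
Qed.

Lemma W_eq r : W M r <-> W Q r.
Proof. by rewrite /W; split => H1 H2; apply: H1; apply/surjs_eq. Qed.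

Lemma lift_sum (I : R -> Prop) (rs : seq (R * Q)) :
  (forall p, p \in rs -> I p.1) ->
  exists x, idealM I x /\ f x = \sum_(p <- rs) p.1 *: p.2.
Proof.
elim: rs => [|q rs IH] HI.
  by exists 0; split; [exists [::]; rewrite big_nil | rewrite linear0 big_nil].
have [x [Hx fx]] : exists x, idealM I x /\ f x = \sum_(p <- rs) p.1 *: p.2.
  by apply: IH => p pin; apply: HI; rewrite inE pin orbT.
have [y fy] := Hf q.2.
exists (q.1 *: y + x); split.
  have [_ HD _] := @idealM_sub M I; apply: HD => //.
  exists [:: (q.1, y)]; split; first by move=> p; rewrite inE => /eqP ->; apply: HI; rewrite inE eqxx.
  by rewrite big_seq1.
by rewrite big_cons linearD linearZ /= fy fx.
Qed.

Lemma idealM_eq (I : R -> Prop) :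
  (forall m : M, idealM I m) <-> (forall q : Q, idealM I q).
Proof.
split.
  move=> H q; have [m <-] := Hf q.
  apply: idealM_map => //; [exact: linear0 | exact: linearD | by move=> a x; rewrite linearZ].
move=> H; apply: small_cover; first exact: idealM_sub.
move=> m; have [rs [HI Hq]] := H (f m).
have [x [Hx fx]] := @lift_sum I rs HI.
by exists x; split => //; rewrite fx Hq.
Qed.

End Helpers.

Theorem theorem2p12 (R : comPzRingType) :
  (forall (M M' : lmodType R),
     (forall r, W M r -> W M' r) ->
     (dual_A M' -> dual_A (M * M')%type) /\
     (dual_strong_A M' -> dual_strong_A (M * M')%type)) /\
  (forall (M : lmodType R) (N : M -> Prop) (Q : lmodType R) (f : {linear M -> Q}),
     small_submodule N ->
     (forall q : Q, exists m : M, f m = q) ->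
     (forall m : M, f m = 0 <-> N m) ->
     (dual_A M <-> dual_A Q) /\ (secondal M <-> secondal Q)).
Proof.
split.
  move=> M M' HW; split.
    move=> HA s Hs Hall; apply: (HA s).
      by move=> r /Hs; apply: W_prod; apply: HW.
    move=> m'; have := Hall (0, m').
    by apply: (@idealM_map _ _ _ (fun p : (M * M')%type => p.2)).
  move=> HS s Hs.
  have [L' [[[L0 LD LZ] [[m0 Hm0] Lirr]] [_ Ls]]] :
     exists L : M' -> Prop, completely_irreducible L /\
      (exists m, ~ L m) /\ (forall a, a \in s -> forall m : M', L (a *: m)).
    by apply: HS => a /Hs; apply: W_prod; apply: HW.
  exists (fun p : (M * M')%type => L' p.2).
  have Hnt : exists m : (M * M')%type, ~ L' m.2 by exists (0, m0).
  split; last by split => // a ain m; apply: Ls.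
  split; first by split => //= [x y|r x]; [apply: LD | apply: LZ].
  split => // F HF HL.
  pose F' := fun K' : M' -> Prop => exists K, F K /\
     forall y, K' y <-> exists m, K (m, y).
  have [K' [[K [FK HK]] HLK]] : exists K', F' K' /\ (forall x, L' x <-> K' x).
    apply: Lirr.
      move=> K' [K [FK HK]]; have [K0 KD KZ] := HF K FK.
      split.
      - by apply/HK; exists 0.
      - move=> x y /HK [a Ka] /HK [b Kb]; apply/HK; exists (a + b).
        exact: (KD _ _ Ka Kb).
      - move=> r x /HK [a Ka]; apply/HK; exists (r *: a); exact: (KZ r _ Ka).
    move=> y; split.
      move=> Ly K' [K [FK HK]]; apply/HK; exists 0.
      by apply: ((HL (0, y)).1 Ly).
    move=> H; apply: ((HL (0, y)).2) => K FK.
    have [m Km] : exists m, K (m, y).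
      by apply: (H (fun y => exists m, K (m, y))); exists K.
    have Km' : K (- m, 0) by apply: ((HL (- m, 0)).1 L0).
    have [_ KD _] := HF K FK; have := KD _ _ Km Km'.
    have E : ((m, y) + (- m, 0) : (M * M')%type) = (0, y).
      by change ((m + - m, y + 0) = (0, y)); rewrite addrN addr0.
    by rewrite E.
  exists K; split => // -[m y] /=; split.
    move=> /HLK /HK [m' Km'].
    have Km2 : K (m - m', 0) by apply: ((HL (m - m', 0)).1 L0).
    have [_ KD _] := HF K FK; have := KD _ _ Km' Km2.
    have E : ((m', y) + (m - m', 0) : (M * M')%type) = (m, y).
      by change ((m' + (m - m'), y + 0) = (m, y)); rewrite addr0 addrC subrK.
    by rewrite E.
  by move=> Kmy; apply/HLK/HK; exists m.
move=> M N Q f HN Hf Hk.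
have HWe := @W_eq R M Q N f HN Hf Hk.
have HIe := @idealM_eq R M Q N f HN Hf Hk.
split.
  split => HA s Hs Hall.
    apply: (HA s); first by move=> r /Hs /HWe.
    by apply/HIe.
  apply: (HA s); first by move=> r /Hs /HWe.
  by apply/HIe.
have HWP : W M = W Q.
  apply: functional_extensionality => r; apply: propositional_extensionality.
  exact: HWe.
rewrite /secondal HWP; split => -[[x Hx] Hi]; split => //.
  apply: NNPP => Hn; apply: Hx.
  have HQ0 : forall q : Q, q = 0 by move=> q; apply: NNPP => Hq; apply: Hn; exists q.
  have Hs0 : submodule (fun m : M => m = 0).
    by split => // [a b -> ->|r a ->]; rewrite ?addr0 ?scaler0.
  apply: (HN.2 _ Hs0) => m; exists 0, m; split => //; split; last by rewrite add0r.
  by apply/Hk/HQ0.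
have [m Hm] := Hf x.
by exists m => Hm0; apply: Hx; rewrite -Hm Hm0 linear0.
Qed.
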